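(* Let $n,k,r,\delta$ be positive integers with $(r+\delta-1)\mid n$, let $d = n-k+1-\left(\lceil k/r\rceil-1\right)(\delta-1)$, and assume $\delta\le d$. Let $q$ be a prime power with $q>kn^k$. Then there exists an $[n,k,d]$ linear code over $\mathbb{F}_q$ with all-symbol locality $(r,\delta)$, i.e. an $(r,\delta)_a$ code whose minimum distance equals $n-k+1-\left(\lceil k/r\rceil-1\right)(\delta-1)$.
   Context: Coordinate $i$ of a linear code $\mathcal{C}$ of length $n$ has locality $(r,\delta)$ if there is $S_i\subseteq[n]$ with $i\in S_i$, $|S_i|\le r+\delta-1$, such that the punctured code $\mathcal{C}|_{S_i}$ (delete coordinates outside $S_i$) has minimum distance at least $\delta$. A code has all-symbol locality $(r,\delta)$ (is an $(r,\delta)_a$ code) if every one of its $n$ coordinates has locality $(r,\delta)$. *)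

(* Defs.v *)
From HB Require Import structures.
From mathcomp Require Import all_boot all_order all_algebra.
Set Implicit Arguments. Unset Strict Implicit. Unset Printing Implicit Defensive.
Import GRing.Theory.
Local Open Scope ring_scope.

(* A linear [n,k] code over F is represented by a generator matrix
   G : 'M[F]_(k, n) of full row rank k; its codewords are the row vectors
   in the row space of G. *)
Section Codes.
Variables (F : fieldType) (n m : nat).

Definition codeword (G : 'M[F]_(m, n)) (c : 'rV[F]_n) : Prop := (c <= G)%MS.

Definition wt_on (S : {set 'I_n}) (c : 'rV[F]_n) : nat :=
  #|[set j in S | c 0 j != 0]|.

Definition wt (c : 'rV[F]_n) : nat := #|[set j | c 0 j != 0]|.

Definition min_dist_eq (G : 'M[F]_(m, n)) (d : nat) : Prop :=
  (exists c, codeword G c /\ c != 0 /\ wt c = d) /\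
  (forall c, codeword G c -> c != 0 -> (d <= wt c)%N).

(* The punctured code C|_S has minimum distance at least delta: every
   nonzero codeword of C|_S (= restriction to S of a codeword of C that is
   not identically zero on S) has weight at least delta. *)
Definition punct_min_dist_ge (G : 'M[F]_(m, n)) (S : {set 'I_n}) (delta : nat)
  : Prop :=
  forall c, codeword G c -> (exists2 j, j \in S & c 0 j != 0) ->
    (delta <= wt_on S c)%N.

Definition has_locality (G : 'M[F]_(m, n)) (r delta : nat) (i : 'I_n) : Prop :=
  exists S : {set 'I_n},
    [/\ i \in S, (#|S| <= r + delta - 1)%N & punct_min_dist_ge G S delta].

Definition all_symbol_locality (G : 'M[F]_(m, n)) (r delta : nat) : Prop :=
  forall i : 'I_n, has_locality G r delta i.

End Codes.

Definition ceil_div (k r : nat) : nat := ((k + r.-1) %/ r)%N.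

(* Main.v *)
Require Import Defs.
From HB Require Import structures.
From mathcomp Require Import all_boot all_order all_algebra all_field.
From mathcomp Require Import zify.
Set Implicit Arguments. Unset Strict Implicit. Unset Printing Implicit Defensive.

Section Lin.
Import GRing.Theory.
Local Open Scope ring_scope.
Variable F : finFieldType.

Lemma row_free_of_inj m p (M : 'M[F]_(m, p)) :
  (forall x : 'rV_m, x *m M = 0 -> x = 0) -> row_free M.
Proof.
move=> H; apply/negPn/negP => nf.
have Hk : kermx M != 0.
  rewrite -mxrank_eq0 mxrank_ker subn_eq0 -ltnNge.
  by rewrite ltn_neqAle rank_leq_row andbT; exact: nf.
have Hu : nz_row (kermx M) *m M = 0 by apply/sub_kermxP; exact: nz_row_sub.
by move: Hk; rewrite -nz_row_eq0 (H _ Hu) eqxx.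
Qed.

Lemma space_card D p (M : 'M[F]_(D, p)) q (W : 'M[F]_(q, p)) (v : 'rV[F]_D) :
  ~~ (v *m M <= W)%MS ->
  (#|F| * #|[set a : 'rV[F]_D | (a *m M <= W)%MS]| <= #|F| ^ D)%N.
Proof.
move=> Hv; set V := [set a : 'rV[F]_D | _].
pose f (z : F * 'rV[F]_D) := z.2 + z.1 *: v.
have inj : {in setX [set: F] V &, injective f}.
  move=> [l a] [mu b] Ha Hb; rewrite /f /= => Heq; move: Ha Hb; rewrite !inE /= => Ha Hb.
  have Hlm : l = mu.
    apply/eqP; apply/negPn/negP => Hne.
    have E : v = (l - mu)^-1 *: (b - a).
      have Hb' : b = a + l *: v - mu *: v by rewrite Heq addrK.
      have E1 : b - a = (l - mu) *: v.
        by rewrite Hb' scalerBl addrAC (addrC a) addrK.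
      by rewrite E1 scalerA mulVf ?subr_eq0 // scale1r.
    move: Hv; rewrite E -scalemxAl mulmxBl.
    by rewrite scalemx_sub // addmx_sub // ?(scaleN1r, mulNmx) // -scaleN1r scalemx_sub.
  by subst; move/addIr: Heq => ->.
have := card_in_imset inj; rewrite cardsX cardsT => <-.
have -> : (#|F| ^ D = #|{: 'rV[F]_D}|)%N by rewrite card_mx mul1n.
by rewrite -cardsT; apply: subset_leq_card; apply/subsetP => x; rewrite inE.
Qed.
Lemma card_bigcup_le (X Y : finType) (P : pred X) (V : X -> {set Y}) :
  (#|\bigcup_(T | P T) V T| <= \sum_(T | P T) #|V T|)%N.
Proof.
apply: (big_ind2 (fun (A : {set Y}) (s : nat) => #|A| <= s)%N).
- by rewrite cards0.
- move=> A1 s1 A2 s2 H1 H2; apply: leq_trans (leq_card_setU _ _) _.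
  exact: leq_add.
- by [].
Qed.

Lemma greedy (X : finType) (fam : {set X}) D k (M : X -> 'M[F]_(D, k)) :
  (#|fam| < #|F|)%N -> (forall T, T \in fam -> (k <= \rank (M T))%N) ->
  forall i, (i <= k)%N ->
  exists A : 'M[F]_(i, D), forall T, T \in fam -> \rank (A *m M T) = i.
Proof.
move=> Hfam HM; elim=> [|i IH] Hi.
  by exists 0 => T _; apply/eqP; rewrite -leqn0 rank_leq_row.
have [A HA] := IH (ltnW Hi).
pose V T := [set a : 'rV[F]_D | (a *m M T <= A *m M T)%MS].
have HV : forall T, T \in fam -> (#|F| * #|V T| <= #|F| ^ D)%N.
  move=> T HT.
  case: (boolP [forall v : 'rV[F]_D, (v *m M T <= A *m M T)%MS]).
    move/forallP => Hall.
    have : (M T <= A *m M T)%MS.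
      rewrite -{1}[M T]mul1mx; apply/row_subP => rho; rewrite row_mul; exact: Hall.
    move/mxrankS; rewrite HA // => Hle.
    by have := leq_trans (HM T HT) Hle; rewrite leqNgt (leq_trans _ Hi).
  by case/forallPn => v Hv; exact: space_card Hv.
have Hsum : (\sum_(T in fam) #|V T| < #|F| ^ D)%N.
  have F0 : (0 < #|F|)%N by apply/card_gt0P; exists 0.
  rewrite -(ltn_pmul2l F0) big_distrr /=.
  apply: (@leq_ltn_trans (\sum_(T in fam) #|F| ^ D)%N); first exact: leq_sum.
  by rewrite sum_nat_const ltn_pmul2r // expn_gt0 F0.
have Hlt : (#|\bigcup_(T in fam) V T| < #|[set: 'rV[F]_D]|)%N.
  by rewrite cardsT card_mx mul1n; apply: leq_ltn_trans (card_bigcup_le _ _) Hsum.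
have [a Ha] : exists a, a \notin \bigcup_(T in fam) V T.
  apply/existsP; apply: contraLR Hlt; rewrite negb_exists => /forallP Hall.
  rewrite -leqNgt; apply: subset_leq_card; apply/subsetP => x _.
  by have := Hall x; rewrite negbK.
exists (col_mx a A) => T HT.
rewrite (mul_col_mx a A (M T)).
have E := (addsmxE (a *m M T) (A *m M T)).1.
transitivity (\rank (a *m M T + A *m M T)%MS); first exact: (esym E).
apply/eqP; rewrite eqn_leq; apply/andP; split.
  apply: leq_trans (mxrank_adds_leqif (a *m M T) (A *m M T)).1 _.
  by rewrite HA // -(add1n i) leq_add2r rank_leq_row.
have := mxrank_leqif_sup (addsmxSr (a *m M T) (A *m M T)).
move/ltn_leqif; rewrite HA // => ->.
rewrite addsmx_sub submx_refl andbT.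
apply: contra Ha => Hin; apply/bigcupP; exists T => //; rewrite inE; exact: Hin.
Qed.
End Lin.

Definition cnt n m (X : {set 'I_n}) (b : nat) := #|[set j in X | j %/ m == b]|.

Lemma cnt_sumE n m (X : {set 'I_n}) b :
  cnt m X b = \sum_(j in X) (j %/ m == b).
Proof.
rewrite /cnt -sum1_card (eq_bigl (fun j => (j \in X) && (j %/ m == b))); last first.
  by move=> j; rewrite inE.
rewrite big_mkcondr /=; apply: eq_bigr => j _; by case: (_ == _).
Qed.

Lemma cnt_sum n m t (X : {set 'I_n}) : (0 < m)%N -> n = (t * m)%N ->
  #|X| = \sum_(b < t) cnt m X b.
Proof.
move=> m0 nE.
rewrite (eq_bigr (fun b : 'I_t => \sum_(j in X) (j %/ m == b))); last first.
  by move=> b _; rewrite cnt_sumE.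
rewrite exchange_big /= -sum1_card; apply: eq_bigr => j _.
have Hj : (j %/ m < t)%N by rewrite ltn_divLR // -nE.
rewrite (bigD1 (Ordinal Hj)) //= eqxx big1 // => b Hb.
apply/eqP; rewrite eqb0; apply: contra Hb => /eqP Hb.
by apply/eqP; apply: val_inj => /=.
Qed.

Lemma cnt_block n m t b : (0 < m)%N -> n = (t * m)%N -> (b < t)%N ->
  cnt m [set: 'I_n] b = m.
Proof.
move=> m0 nE bt.
have ltB : forall u : 'I_m, (b * m + u < n)%N.
  move=> u; rewrite nE; have := ltn_ord u; nia.
pose f (u : 'I_m) : 'I_n := Ordinal (ltB u).
rewrite /cnt.
have -> : [set j in [set: 'I_n] | j %/ m == b] = f @: [set: 'I_m].
  apply/setP => j; rewrite !inE; apply/idP/imsetP.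
    move=> /eqP Hj.
    exists (Ordinal (ltn_pmod j m0)) => //; apply: val_inj => /=.
    by rewrite -Hj -divn_eq.
  move=> [u _ ->] /=; rewrite divnMDl // divn_small ?addn0 //.
rewrite card_imset ?cardsT ?card_ord //.
by move=> u v /(congr1 val) /= /addnI /val_inj.
Qed.

Lemma cntU1 n m (T : {set 'I_n}) j b : j \notin T ->
  cnt m (j |: T) b = ((j %/ m == b) + cnt m T b)%N.
Proof. by move=> Hj; rewrite !cnt_sumE big_setU1. Qed.

Lemma sum_in_le I (A : {set I}) (f : I -> nat) :
  (\sum_(i in A) f i <= \sum_i f i)%N.
Proof.
rewrite big_mkcond /=; apply: leq_sum => i _; by case: (_ \in _).
Qed.

Lemma sum_ind_const I (A : {set I}) c :
  (\sum_i ((i \in A) * c) = #|A| * c)%N.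
Proof.
rewrite -sum_nat_const [RHS]big_mkcond /=; apply: eq_bigr => i _.
by case: (_ \in _); rewrite ?mul1n ?mul0n.
Qed.

Lemma select_T n m t r k s (Z : {set 'I_n}) :
  (0 < m)%N -> n = (t * m)%N -> (r <= m)%N -> (k <= s.+1 * r)%N ->
  (k + s * (m - r) <= #|Z|)%N ->
  exists T : {set 'I_n},
    [/\ T \subset Z, #|T| = k & forall j : 'I_n, (cnt m T (j %/ m) <= r)%N].
Proof.
move=> m0 nE rm ksr HZ.
pose P (T : {set 'I_n}) :=
  [&& T \subset Z, (#|T| <= k)%N & [forall j : 'I_n, (cnt m T (j %/ m) <= r)%N]].
have P0 : P set0.
  apply/and3P; split; rewrite ?sub0set ?cards0 //; apply/forallP => j.
  by rewrite cnt_sumE big_set0.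
case: (@arg_maxnP _ set0 P (fun T => #|T|) P0) => T /and3P[HTZ HTk /forallP HTr] Hmax.
exists T; split => //.
apply/eqP; rewrite eqn_leq HTk /= leqNgt; apply/negP => Hlt.
case: (boolP [exists j : 'I_n, [&& j \in Z, j \notin T & (cnt m T (j %/ m) < r)%N]]).
  case/existsP => j /and3P[HjZ HjT Hjr].
  have : P (j |: T).
    apply/and3P; split.
    - by rewrite subUset sub1set HjZ HTZ.
    - by rewrite cardsU1 HjT.
    - apply/forallP => j'; rewrite cntU1 //.
      case: eqP => [<-|_] //=; by rewrite ?add0n ?add1n ?HTr.
  move/Hmax; rewrite cardsU1 HjT /=; by rewrite ltnn.
rewrite negb_exists => /forallP Hno.
have Hno' : forall j, j \in Z -> j \notin T -> (r <= cnt m T (j %/ m))%N.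
  move=> j HjZ HjT; have := Hno j; by rewrite HjZ HjT /= -leqNgt.
pose U := [set b : 'I_t | (r <= cnt m T b)%N].
have H1 : forall b : 'I_t, (cnt m Z b <= cnt m T b + (b \in U) * (m - r))%N.
  move=> b; case bU: (b \in U).
    have : (cnt m Z b <= m)%N.
      rewrite -{2}(@cnt_block n m t b m0 nE (ltn_ord b)).
      by apply: subset_leq_card; apply/subsetP => j; rewrite !inE => /andP[_ ->].
    move: bU; rewrite inE => bU; lia.
  rewrite mul0n addn0; apply: subset_leq_card; apply/subsetP => j; rewrite !inE.
  case/andP => HjZ /eqP Hjb; rewrite Hjb eqxx andbT.
  apply/negPn/negP => HjT; have := Hno' j HjZ HjT; rewrite Hjb => Hr.
  by move: bU; rewrite inE Hr.
have H2 : (#|Z| <= #|T| + #|U| * (m - r))%N.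
  rewrite (cnt_sum Z m0 nE) (cnt_sum T m0 nE) -sum_ind_const -big_split /=.
  exact: leq_sum.
have H3 : (#|U| * r <= #|T|)%N.
  rewrite (cnt_sum T m0 nE) -sum_nat_const.
  apply: leq_trans (sum_in_le _ _).
  by apply: leq_sum => b; rewrite inE.
have r0 : (0 < r)%N by move: ksr Hlt; case: (r) => [|//]; rewrite muln0; lia.
have Hus : (#|U| <= s)%N.
  by rewrite -ltnS -(ltn_pmul2r r0); exact: leq_ltn_trans H3 (leq_trans Hlt ksr).
have := leq_mul Hus (leqnn (m - r)).
move: H2 HZ Hlt; generalize (#|U| * (m - r))%N (s * (m - r))%N.
move=> x y h1 h2 h3 h4.
have := leq_trans h2 h1. have := leq_add (ltnW h3) h4. move=> a b.
have := leq_trans b (leq_add (leqnn _) h4). rewrite leq_add2r leqNgt h3 //.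
Qed.

Section Code.
Import GRing.Theory.
Local Open Scope ring_scope.
Variables (F : finFieldType) (n m t r : nat) (alpha : 'I_n -> F).
Hypotheses (alpha_inj : injective alpha) (m0 : (0 < m)%N) (nE : n = (t * m)%N)
  (rm : (r <= m)%N).

Definition Bmx : 'M[F]_(t * r, n) :=
  \matrix_(rho, j) if (rho %/ r == j %/ m)%N then alpha j ^+ (rho %% r)%N else 0.

Lemma local_wt (y : 'rV[F]_(t * r)) (j0 : 'I_n) :
  (y *m Bmx) 0 j0 != 0 ->
  (m + 1 - r <= wt_on [set j : 'I_n | (j %/ m == j0 %/ m)%N] (y *m Bmx))%N.
Proof.
move=> Hc0.
set c := y *m Bmx; set b := (j0 %/ m)%N.
pose p : {poly F} := \sum_(rho < t * r | (rho %/ r == b)%N) y 0 rho *: 'X^(rho %% r)%N.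
have Hp : forall j : 'I_n, (j %/ m)%N = b -> c 0 j = p.[alpha j].
  move=> j Hj; rewrite !mxE horner_sum [RHS]big_mkcond /=.
  apply: eq_bigr => rho _; rewrite mxE Hj.
  by case: eqP => _; rewrite ?hornerZ ?hornerXn ?mulr0.
have Hsize : (size p <= r)%N.
  apply: leq_trans (size_sum _ _ _) _; apply/bigmax_leqP => rho _.
  apply: leq_trans (size_scale_leq _ _) _; rewrite size_polyXn.
  have : (0 < t * r)%N by apply: leq_ltn_trans (ltn_ord rho).
  by rewrite muln_gt0 => /andP[_ r0]; rewrite ltn_pmod.
have p0 : p != 0.
  by apply: contraNneq Hc0 => p0; rewrite Hp // p0 horner0.
set S := [set j : 'I_n | (j %/ m)%N == b].
pose Zs := [set j in S | c 0 j == 0].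
have HZs : (#|Zs| < r)%N.
  have := @max_poly_roots _ p (map alpha (enum Zs)) p0.
  rewrite size_map -cardE => H; apply: leq_trans (H _ _) Hsize.
    apply/allP => x /mapP [j]; rewrite mem_enum inE => /andP[Hj /eqP Hcj] ->.
    by rewrite /root -Hp //; [rewrite Hcj | move: Hj; rewrite inE => /eqP].
  by rewrite map_inj_uniq ?enum_uniq.
have HS : #|S| = m.
  have bt : (b < t)%N by rewrite /b ltn_divLR // -nE.
  rewrite -(@cnt_block n m t b m0 nE bt) /cnt; apply: eq_card => j.
  by rewrite !inE.
have := cardsID [set j | c 0 j == 0] S.
have -> : S :&: [set j | c 0 j == 0] = Zs by apply/setP => j; rewrite !inE.
have -> : S :\: [set j | c 0 j == 0] = [set j in S | c 0 j != 0].
  by apply/setP => j; rewrite !inE andbC.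
rewrite HS /wt_on => H.
move: H HZs; set X := #|[set j in S | c 0 j != 0]|; set Y := #|Zs|.
move=> H1 H2; suff : (m + 1 - r <= X)%N by []. lia.
Qed.

Definition tj (T : {set 'I_n}) (j0 : 'I_n) (i : nat) : 'I_n := nth j0 (enum T) i.
Definition Qmx k (T : {set 'I_n}) (j0 : 'I_n) : 'M[F]_(n, k) :=
  \matrix_(j, i) ((j == tj T j0 i)%:R).

Lemma BQ_entry k T j0 rho (i : 'I_k) :
  (Bmx *m Qmx k T j0) rho i = Bmx rho (tj T j0 i).
Proof.
rewrite mxE (bigD1 (tj T j0 i)) //= big1 ?addr0.
  by rewrite [Qmx _ _ _ _ _]mxE eqxx mulr1.
by move=> j Hj; rewrite [Qmx _ _ _ _ _]mxE (negbTE Hj) mulr0.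
Qed.

Lemma tj_in k (T : {set 'I_n}) (j0 : 'I_n) (i : 'I_k) : #|T| = k -> tj T j0 i \in T.
Proof. by move=> HT; rewrite -mem_enum mem_nth // -cardE HT. Qed.

Lemma tj_inj k (T : {set 'I_n}) (j0 : 'I_n) (i i' : 'I_k) : #|T| = k -> tj T j0 i = tj T j0 i' -> i = i'.
Proof.
move=> HT /eqP; rewrite /tj nth_uniq ?enum_uniq // -?cardE ?HT //.
by move/eqP/val_inj.
Qed.

Lemma rank_BQ k (T : {set 'I_n}) (j0 : 'I_n) : #|T| = k ->
  (forall j : 'I_n, (cnt m T (j %/ m) <= r)%N) ->
  (k <= \rank (Bmx *m Qmx k T j0))%N.
Proof.
move=> HT Hcnt.
rewrite -mxrank_tr (eqP (row_free_of_inj _)) //.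
move=> x Hx; apply/rowP => i0; rewrite [RHS]mxE.
set tjf := tj T j0.
have Hrow : forall rho, \sum_(i < k) x 0 i * Bmx rho (tjf i) = 0.
  move=> rho; transitivity ((x *m (Bmx *m Qmx k T j0)^T) 0 rho); last first.
    by rewrite Hx mxE.
  rewrite mxE; apply: eq_bigr => i _; by rewrite [in RHS]mxE BQ_entry.
set b := (tjf i0 %/ m)%N.
have bt : (b < t)%N by rewrite /b ltn_divLR // -nE.
pose Sb := [set i : 'I_k | (tjf i %/ m)%N == b].
have HSb : (#|Sb| <= r)%N.
  rewrite -(card_in_imset (f := fun i : 'I_k => tjf i) (D := Sb)); last first.
    by move=> i i' _ _; apply: tj_inj.
  apply: leq_trans (Hcnt (tjf i0)); apply: subset_leq_card.
  apply/subsetP => j /imsetP [i]; rewrite inE => Hi ->.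
  by rewrite inE tj_in.
pose Sidx := Sb :\ i0.
have HSidx : (#|Sidx| < r)%N.
  by move: HSb; rewrite (cardsD1 i0 Sb) inE eqxx.
pose rs := map (fun i : 'I_k => alpha (tjf i)) (enum Sidx).
pose L : {poly F} := \prod_(a <- rs) ('X - a%:P).
have HL : (size L <= r)%N by rewrite size_prod_XsubC size_map -cardE.
have ltR : forall u : 'I_r, (b * r + u < t * r)%N.
  move=> u; have := ltn_ord u; nia.
pose ri (u : 'I_r) : 'I_(t * r) := Ordinal (ltR u).
have HB : forall (u : 'I_r) (i : 'I_k),
    Bmx (ri u) (tjf i) = if (b == tjf i %/ m)%N then alpha (tjf i) ^+ u else 0.
  move=> u i; rewrite mxE /=.
  have r0 : (0 < r)%N by apply: leq_ltn_trans (ltn_ord u).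
  by rewrite divnMDl // divn_small // addn0 modnMDl modn_small.
have Hkey : \sum_(u < r) L`_u * (\sum_(i < k) x 0 i * Bmx (ri u) (tjf i)) = 0.
  by rewrite big1 // => u _; rewrite Hrow mulr0.
have Hkey2 : \sum_(i < k) x 0 i *
    (if (b == tjf i %/ m)%N then L.[alpha (tjf i)] else 0) = 0.
  rewrite -[RHS]Hkey (eq_bigr _ (fun u _ => mulr_sumr _ _ _ _)) /= exchange_big /=.
  apply: eq_bigr => i _; case: ifP => Hbi.
    rewrite (horner_coef_wide _ HL) mulr_sumr; apply: eq_bigr => u _.
    by rewrite HB Hbi mulrCA.
  by rewrite mulr0 big1 // => u _; rewrite HB Hbi !mulr0.
have HL0 : ~~ root L (alpha (tjf i0)).
  rewrite root_prod_XsubC; apply/mapP => [[i Hi Heq]].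
  move: Hi; rewrite mem_enum !inE => /andP[Hne _].
  by move: Hne; rewrite (tj_inj HT (alpha_inj Heq)) eqxx.
move: Hkey2; rewrite (bigD1 i0) //= eqxx big1 ?addr0.
  by move/eqP; rewrite mulf_eq0 -rootE (negbTE HL0) orbF => /eqP.
move=> i Hi; case: ifP => Hbi; last by rewrite mulr0.
have : root L (alpha (tjf i)).
  rewrite root_prod_XsubC; apply: map_f; rewrite mem_enum !inE Hi /=.
  by rewrite eq_sym.
by move/rootP => ->; rewrite mulr0.
Qed.
End Code.

Lemma bin_le_exp n k : ('C(n, k) <= n ^ k)%N.
Proof.
apply: leq_trans (leq_pmulr _ (fact_gt0 k)) _.
rewrite bin_ffact ffact_prod.
have -> : (n ^ k = \prod_(i < k) n)%N by rewrite prod_nat_const card_ord.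
by apply: leq_prod => i _; exact: leq_subr.
Qed.

Lemma card_lt n N : (N <= n)%N -> #|[set j : 'I_n | (j < N)%N]| = N.
Proof.
move=> Nn.
have -> : [set j : 'I_n | (j < N)%N] = (widen_ord Nn) @: [set: 'I_N].
  apply/setP => j; rewrite inE; apply/idP/imsetP.
    by move=> Hj; exists (Ordinal Hj) => //; apply: val_inj.
  by move=> [u _ ->] /=.
by rewrite card_imset ?cardsT ?card_ord //; by move=> u v /(congr1 val) /= /val_inj.
Qed.

Section MulQ.
Import GRing.Theory.
Local Open Scope ring_scope.
Lemma mulQ_entry (F : finFieldType) n p k (T : {set 'I_n}) (j0 : 'I_n)
    (P : 'M[F]_(p, n)) a (i : 'I_k) :
  (P *m Qmx F k T j0) a i = P a (tj T j0 i).
Proof.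
rewrite mxE (bigD1 (tj T j0 i)) //= big1 ?addr0.
  by rewrite [Qmx _ _ _ _ _ _]mxE eqxx mulr1.
by move=> j Hj; rewrite [Qmx _ _ _ _ _ _]mxE (negbTE Hj) mulr0.
Qed.
End MulQ.

Lemma arL2 n k X delta z w : (0 < delta)%N -> (delta <= n + 1 - k - X)%N ->
  (z + w = n)%N -> (w < n + 1 - k - X)%N -> (k + X <= z)%N.
Proof. lia. Qed.
Lemma arL3 n k X delta : (0 < delta)%N -> (delta <= n + 1 - k - X)%N -> (k + X <= n)%N.
Proof. lia. Qed.
Lemma arL4 a sr k : (sr < k)%N -> (a < sr)%N -> (a < k.-1)%N.
Proof. lia. Qed.
Lemma arL5 j sr b k : (j < k.-1 + b)%N -> (sr + b <= j)%N -> (sr + (j - (sr + b)) < k.-1)%N.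
Proof. lia. Qed.
Lemma arL6 n k X delta : (0 < delta)%N -> (0 < k)%N -> (delta <= n + 1 - k - X)%N ->
  (k.-1 + X <= n)%N /\ (n - (k.-1 + X) = n + 1 - k - X)%N.
Proof. lia. Qed.

Theorem theorem5 (n k r delta : nat) (q : nat) (F : finFieldType) :
  (0 < n)%N -> (0 < k)%N -> (0 < r)%N -> (0 < delta)%N ->
  (r + delta - 1 %| n)%N ->
  (delta <= (n + 1 - k) - (ceil_div k r - 1) * (delta - 1))%N ->
  #|F| = q -> (k * n ^ k < q)%N ->
  exists G : 'M[F]_(k, n),
    \rank G = k /\
    min_dist_eq G ((n + 1 - k) - (ceil_div k r - 1) * (delta - 1))%N /\
    all_symbol_locality G r delta.
Proof.
move=> n0 k0 r0 d0 Hdiv Hd Hq Hkq.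
set m := (r + delta - 1)%N.
have m0 : (0 < m)%N by rewrite /m; lia.
have rm : (r <= m)%N by rewrite /m; lia.
have mr : (m - r = delta - 1)%N by rewrite /m; lia.
set t := (n %/ m)%N.
have nE : n = (t * m)%N by rewrite /t divnK.
set c := ceil_div k r.
have Hc1 : (c * r <= k + r.-1)%N by rewrite /c /ceil_div leq_trunc_div.
have Hc2 : (k + r.-1 < c.+1 * r)%N by rewrite /c /ceil_div ltn_ceil.
have c0 : (0 < c)%N.
  by move: Hc2; case: (c) => [|//]; rewrite mul1n; lia.
set s := (c - 1)%N in Hd *.
have cs : c = s.+1 by rewrite /s; lia.
have Hks : (k <= s.+1 * r)%N by rewrite -cs; move: Hc2; rewrite mulSn; lia.
have Hsk : (s * r < k)%N.
  move: Hc1; rewrite cs mulSn => H; have : (r + s * r <= k + r.-1)%N by [].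
  lia.
set d := ((n + 1 - k) - s * (delta - 1))%N in Hd *.
set X := (s * (delta - 1))%N.
have st : (s < t)%N.
  rewrite ltnNge; apply/negP => ts.
  have H1 := leq_mul ts (leqnn r); have H2 := leq_mul ts (leqnn (delta - 1)).
  have : n = (t * r + t * (delta - 1))%N by rewrite nE /m -mulnDr; congr (_ * _); lia.
  move: H1 H2 Hsk Hd; rewrite /d -/X.
  generalize (t * r)%N (s * r)%N (t * (delta - 1))%N; lia.
have Fmd : (m + 1 - r = delta)%N by rewrite -addnBAC // mr subnK.
have HdX : (delta <= n + 1 - k - X)%N by [].
have FZ : forall z w, (z + w = n)%N -> (w < d)%N -> (k + s * (m - r) <= z)%N.
  by move=> z w; rewrite mr -/X /d; exact: arL2 d0 HdX.
have FT : (k + s * (m - r) <= n)%N by rewrite mr -/X; exact: arL3 d0 HdX.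
have Fk : (k.-1 < k)%N by rewrite prednK.
have Frho : forall a, (a < s * r)%N -> (a < k.-1)%N by move=> a; exact: arL4 Hsk.
have Fsm : (s * m = s * r + s * (m - r))%N by rewrite -mulnDr subnKC.
have FHl : forall j, (j < k.-1 + s * (m - r))%N -> (s * m <= j)%N ->
    (s * r + (j - s * m) < k.-1)%N.
  by move=> j; rewrite Fsm; exact: arL5.
have FN : (k.-1 + s * (m - r) <= n)%N /\ (n - (k.-1 + s * (m - r)) = d)%N.
  by rewrite mr -/X; exact: arL6 d0 k0 HdX.
have nq : (n < #|F|)%N.
  rewrite Hq; apply: leq_ltn_trans Hkq; apply: leq_trans (leq_pmull _ k0).
  by rewrite -{1}(expn1 n) leq_pexp2l.
pose j0 : 'I_n := Ordinal n0.
pose alpha (j : 'I_n) : F := nth (0%R : F) (enum F) j.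
have alpha_inj : injective alpha.
  move=> i j; rewrite /alpha => /eqP; rewrite nth_uniq ?enum_uniq -?cardE.
  - by move/eqP/val_inj.
  - exact: ltn_trans (ltn_ord i) nq.
  - exact: ltn_trans (ltn_ord j) nq.
  - by [].
pose B := Bmx m t r alpha.
pose M (T : {set 'I_n}) := (B *m Qmx F k T j0)%R.
pose fam := [set T : {set 'I_n} | (#|T| == k) && (k <= \rank (M T))%N].
have Hfam : (#|fam| < #|F|)%N.
  apply: (@leq_ltn_trans 'C(n, k)).
    rewrite -[X in 'C(X, _)](card_ord n) -card_draws; apply: subset_leq_card.
    by apply/subsetP => T; rewrite !inE => /andP[-> _].
  rewrite Hq; apply: leq_ltn_trans (bin_le_exp n k) (leq_ltn_trans (leq_pmull _ k0) Hkq).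
have [A HA] := @greedy F _ fam _ _ M Hfam
  (fun T HT => let: conj _ h := andP (eqbLR (in_set _ _) HT) in h) k (leqnn k).
pose G := (A *m B)%R.
have Hsel : forall Z : {set 'I_n}, (k + s * (m - r) <= #|Z|)%N ->
    exists2 T : {set 'I_n}, T \subset Z & T \in fam.
  move=> Z HZ; have [T [HTZ HTk HTc]] := select_T m0 nE rm Hks HZ.
  exists T => //; rewrite inE HTk eqxx /=.
  exact: (rank_BQ alpha_inj m0 nE rm j0 HTk HTc).
have Hzero : forall (x : 'rV[F]_k) (T : {set 'I_n}), T \in fam ->
    (forall j, j \in T -> ((x *m G) 0 j = 0)%R) -> x = 0%R.
  move=> x T HT Hj.
  have HTk : #|T| = k by move: HT; rewrite inE => /andP[/eqP].
  have Hrf : row_free (A *m M T)%R by rewrite /row_free HA.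
  apply: (row_free_inj Hrf); rewrite mul0mx /M !mulmxA -(mulmxA x A B) -/G.
  by apply/rowP => i; rewrite mulQ_entry (Hj _ (tj_in j0 i HTk)) mxE.
have Hlow : forall x : 'rV[F]_k, (x *m G)%R != 0%R -> (d <= wt (x *m G)%R)%N.
  move=> x Hx; rewrite leqNgt; apply/negP => Hlt.
  pose Z := [set j : 'I_n | ((x *m G) 0 j == 0)%R].
  have HZ : (#|Z| + wt (x *m G)%R = n)%N.
    rewrite /wt -[in RHS](card_ord n) -(cardsC Z); congr (_ + _).
    by apply: eq_card => j; rewrite !inE.
  have [T HTZ HT] := Hsel Z (FZ _ _ HZ Hlt).
  move/negP: Hx; apply; apply/eqP; rewrite (Hzero x T HT) ?mul0mx //.
  by move=> j Hj; have := subsetP HTZ j Hj; rewrite inE => /eqP.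
have HrG : \rank G = k.
  apply/eqP; rewrite eqn_leq rank_leq_row /=.
  have [T _ HT] := Hsel [set: 'I_n]
    (ltac:(by rewrite cardsT card_ord)).
  rewrite -{1}(HA T HT) /M mulmxA; exact: mxrankM_maxl.
have HGf : row_free G by rewrite /row_free HrG.
have Hloc : all_symbol_locality G r delta.
  move=> i; exists [set j : 'I_n | (j %/ m == i %/ m)%N]; split.
  - by rewrite inE.
  - have it : (i %/ m < t)%N by rewrite ltn_divLR // -nE.
    rewrite -/m; apply: (@leq_trans (cnt m [set: 'I_n] (i %/ m))).
      by rewrite /cnt; apply: subset_leq_card; apply/subsetP => j; rewrite !inE.
    by rewrite (@cnt_block n m t _ m0 nE it).
  - move=> cw /submxP [x ->] [j HjS Hj].
    move: Hj; rewrite /G mulmxA => Hj.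
    have := local_wt alpha_inj m0 nE rm Hj.
    rewrite Fmd.
    have -> : [set j' : 'I_n | (j' %/ m == j %/ m)%N] =
              [set j' : 'I_n | (j' %/ m == i %/ m)%N].
      by apply/setP => j'; move: HjS; rewrite !inE => /eqP ->.
    by [].
pose N := (k.-1 + s * (m - r))%N.
pose jl (l : 'I_k.-1) : 'I_n := insubd j0 (s * m + (l - s * r))%N.
pose H : 'M[F]_(t * r, k.-1) := (\matrix_(rho, l)
  (if (l < s * r)%N then ((rho : nat) == l)%:R else B rho (jl l)))%R.
pose C := (A *m H)%R.
have HkerC : kermx C != 0%R.
  rewrite -mxrank_eq0 mxrank_ker subn_eq0 -ltnNge.
  exact: leq_ltn_trans (rank_leq_col C) Fk.
pose x := nz_row (kermx C).
have x0 : x != 0%R by rewrite nz_row_eq0.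
have xC : (x *m C = 0)%R by apply/sub_kermxP; exact: nz_row_sub.
pose y := (x *m A)%R.
have yH : (y *m H = 0)%R by rewrite /y -mulmxA.
have Hy1 : forall rho : 'I_(t * r), (rho < s * r)%N -> (y 0 rho = 0)%R.
  move=> rho Hrho; have Hl : (rho < k.-1)%N by exact: Frho.
  transitivity ((y *m H)%R 0%R (Ordinal Hl)); last by rewrite yH mxE.
  rewrite [RHS]mxE (bigD1 rho) //= big1 ?GRing.addr0.
    by rewrite [H _ _]mxE /= Hrho eqxx GRing.mulr1.
  move=> rho' Hne; rewrite [H _ _]mxE /= Hrho.
  have -> : ((rho' : nat) == rho) = false by apply/negbTE; exact: Hne.
  by rewrite GRing.mulr0.
have Hy2 : forall l : 'I_k.-1, (s * r <= l)%N -> ((y *m B) 0 (jl l) = 0)%R.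
  move=> l Hl; transitivity ((y *m H)%R 0%R l); last by rewrite yH mxE.
  rewrite mxE [in RHS]mxE; apply: eq_bigr => rho _.
  by rewrite [H _ _]mxE ltnNge Hl.
have HxG : (x *m G = y *m B)%R by rewrite /G /y mulmxA.
have Hvan : forall j : 'I_n, (j < N)%N -> ((x *m G) 0 j = 0)%R.
  move=> j Hj; rewrite HxG; case: (ltnP j (s * m)) => Hjs.
    rewrite mxE big1 // => rho _; rewrite [B _ _]mxE.
    case: ifP => [/eqP E|_]; last by rewrite GRing.mulr0.
    rewrite Hy1 ?GRing.mul0r //.
    by rewrite -ltn_divLR ?E ?ltn_divLR // (leq_ltn_trans (leq0n _) (ltn_ord rho)).
  have Hl : (s * r + (j - s * m) < k.-1)%N.
    exact: FHl.
  have := Hy2 (Ordinal Hl) (leq_addr _ _).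
  have -> : jl (Ordinal Hl) = j.
    by apply: val_inj; rewrite /jl val_insubd /= addKn subnKC // ltn_ord.
  by [].
have Hwt : (wt (x *m G)%R <= n - N)%N.
  have E := cardsC [set j : 'I_n | (j < N)%N].
  rewrite card_lt ?(proj1 FN) // card_ord in E.
  have -> : (n - N = #|~: [set j : 'I_n | (j < N)%N]|)%N by rewrite -[in LHS]E addKn.
  apply: subset_leq_card; apply/subsetP => j; rewrite !inE.
  by apply: contra => Hj; apply/eqP; exact: Hvan.
have xG0 : (x *m G != 0)%R.
  apply: contra x0 => /eqP H0; apply/eqP; apply: (row_free_inj HGf).
  by rewrite H0 mul0mx.
exists G; split => //; split => //.
split.
  exists (x *m G)%R; split; first exact: submxMl.
  split => //; apply/eqP; rewrite eqn_leq (Hlow _ xG0) andbT.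
  by rewrite -(proj2 FN).
by move=> cw /submxP [x' ->] Hne; exact: Hlow.
Qed.
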